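(* There is no medial T2R semigroup, i.e. no T2R semigroup satisfies the identity $axyb=ayxb$ for all $a,b,x,y$.
   Context: A semigroup $S$ is a $\Delta$-semigroup if the lattice of all congruences of $S$ is a chain with respect to inclusion. A semigroup $N$ with zero $0$ is nil if every element has some power equal to $0$; non-trivial means having more than one element. A T2R semigroup is a $\Delta$-semigroup $S$ which is the disjoint union of a non-trivial nil ideal $S_0$ (with zero $0$, which is then the zero of $S$) and a subsemigroup $S_1=\{u,v\}$, $u\neq v$, which is a right zero semigroup ($xy=y$ for $x,y\in S_1$). *)

(* Defs.v *)
From Stdlib Require Import Arith.

Definition associative {S : Type} (mul : S -> S -> S) : Prop :=
  forall x y z, mul x (mul y z) = mul (mul x y) z.

Definition congruence {S : Type} (mul : S -> S -> S) (R : S -> S -> Prop) : Prop :=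
  (forall x, R x x) /\ (forall x y, R x y -> R y x) /\
  (forall x y z, R x y -> R y z -> R x z) /\
  (forall x y c, R x y -> R (mul c x) (mul c y) /\ R (mul x c) (mul y c)).

Definition rel_incl {S : Type} (R1 R2 : S -> S -> Prop) : Prop :=
  forall x y, R1 x y -> R2 x y.

Definition delta_semigroup {S : Type} (mul : S -> S -> S) : Prop :=
  associative mul /\
  forall R1 R2, congruence mul R1 -> congruence mul R2 ->
    rel_incl R1 R2 \/ rel_incl R2 R1.

(* x^n for n >= 1, written as pow x n = x^(n+1) *)
Fixpoint spow {S : Type} (mul : S -> S -> S) (x : S) (n : nat) : S :=
  match n with
  | O => x
  | Datatypes.S m => mul (spow mul x m) x
  end.

Definition T2R {S : Type} (mul : S -> S -> S) : Prop :=
  delta_semigroup mul /\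
  exists (S0 : S -> Prop) (z u v : S),
    S0 z /\ (forall x, S0 x -> mul x z = z /\ mul z x = z) /\
    (forall x y, S0 x -> S0 (mul x y) /\ S0 (mul y x)) /\
    (forall x, S0 x -> exists n, spow mul x n = z) /\
    (exists x, S0 x /\ x <> z) /\
    u <> v /\ ~ S0 u /\ ~ S0 v /\
    (forall x, S0 x \/ x = u \/ x = v) /\
    mul u u = u /\ mul u v = v /\ mul v u = u /\ mul v v = v.

Definition medial {S : Type} (mul : S -> S -> S) : Prop :=
  forall a b x y, mul (mul (mul a x) y) b = mul (mul (mul a y) x) b.

(* Main.v *)
Require Import Defs.

Theorem mainTheorem11 (S : Type) (mul : S -> S -> S) :
  T2R mul -> ~ medial mul.
Proof.
  intros [[A Hchain] H] Hmed.
  destruct H as (S0 & z & u & v & Hz & Hzero & Hid & Hnil & (p0 & Hp0 & Hp0z) &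
    Huv & HnSu & HnSv & Hcov & Huu & Huv' & Hvu & Hvv).
  unfold associative in A.
  assert (IdR : forall x y, S0 x -> S0 (mul x y)) by (intros x y H; exact (proj1 (Hid x y H))).
  assert (IdL : forall x y, S0 x -> S0 (mul y x)) by (intros x y H; exact (proj2 (Hid x y H))).
  assert (Z : forall s, mul s z = z /\ mul z s = z).
  { intro s. assert (Hzz : mul z z = z) by (apply (Hzero z Hz)).
    split.
    - rewrite <- Hzz at 1. rewrite A. apply (Hzero _ (proj2 (Hid z s Hz))).
    - rewrite <- Hzz at 1. rewrite <- A. apply (Hzero _ (proj1 (Hid z s Hz))). }
  assert (RZ : forall a b, (a = u \/ a = v) -> (b = u \/ b = v) -> mul a b = b).
  { intros a b [-> | ->] [-> | ->]; assumption. }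
  set (rho := fun x y => x = y \/ (S0 x /\ S0 y)).
  assert (Hrho : congruence mul rho).
  { unfold rho; split; [|split; [|split]].
    - intro; left; reflexivity.
    - intros x y [H|[H1 H2]]; [left; symmetry; assumption | right; split; assumption].
    - intros x y w [H|[H1 H2]] [H'|[H1' H2']]; subst; try (left; reflexivity); right; split; assumption.
    - intros x y c [H|[H1 H2]].
      + subst; split; left; reflexivity.
      + split; right; split; auto. }
  assert (key : forall X, congruence mul X -> X u v -> forall p, S0 p -> X p z).
  { intros X HX Huv2 p Hp.
    destruct (Hchain rho X Hrho HX) as [H|H].
    - apply H. right; split; assumption.
    - exfalso. destruct (H u v Huv2) as [E|[E _]]; contradiction. }
  assert (St1 : forall s p t, S0 p -> mul (mul s p) t = z).
  { intros s p t Hp.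
    set (sig := fun x y => forall s t, mul (mul s x) t = mul (mul s y) t).
    assert (Hs : congruence mul sig).
    { unfold sig; split; [|split; [|split]].
      - intros; reflexivity.
      - intros; symmetry; auto.
      - intros x y w H1 H2 s' t'. rewrite H1; auto.
      - intros x y c H; split; intros s' t'.
        + rewrite !A. apply H.
        + rewrite !(A s'). rewrite <- !(A (mul s' _) c t').
          apply H. }
    assert (Huv2 : sig u v).
    { intros s' t'. pose proof (Hmed s' t' u v) as M.
      rewrite <- (A s' u v), <- (A s' v u) in M. rewrite Huv', Hvu in M. symmetry; exact M. }
    pose proof (key sig Hs Huv2 p Hp s t) as E. rewrite E.
    rewrite (proj1 (Z s)). apply Z. }
  assert (St2 : forall w, (w = u \/ w = v) -> forall p, S0 p -> mul p w = z).
  { intros w Hw p Hp.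
    set (tau := fun x y => mul x w = mul y w).
    assert (Ht : congruence mul tau).
    { unfold tau; split; [|split; [|split]].
      - intros; reflexivity.
      - intros; symmetry; auto.
      - intros x y w' H1 H2. rewrite H1; auto.
      - intros x y c H; split.
        + rewrite <- !A. rewrite H. reflexivity.
        + destruct (Hcov c) as [Hc|Hc].
          * rewrite !St1; auto.
          * rewrite <- !A. rewrite (RZ c w); auto. }
    assert (Huv2 : tau u v) by (unfold tau; rewrite !RZ; auto).
    pose proof (key tau Ht Huv2 p Hp) as E. unfold tau in E. rewrite E. apply Z. }
  set (T := fun x => exists s q, S0 q /\ x = mul s q).
  assert (TS0 : forall x, T x -> S0 x).
  { intros x [s [q [Hq ->]]]. auto. }
  set (UV := fun x => x = u \/ x = v).
  set (th := fun x y => x = y \/ (UV x /\ UV y) \/ (T x /\ T y)).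
  assert (UVn : forall x, UV x -> ~ S0 x).
  { intros x [->| ->]; assumption. }
  assert (Hth : congruence mul th).
  { unfold th; split; [|split; [|split]].
    - intro; left; reflexivity.
    - intros x y [H|[[H1 H2]|[H1 H2]]]; [left; symmetry; assumption|right;left;split;assumption|right;right;split;assumption].
    - intros x y w [H|[[H1 H2]|[H1 H2]]] [H'|[[H1' H2']|[H1' H2']]]; subst; first [left; reflexivity | right; left; split; assumption | right; right; split; assumption | exfalso; apply (UVn y); [assumption | apply TS0; assumption] ].
    - intros x y c [H|[[H1 H2]|[H1 H2]]].
      + subst; split; left; reflexivity.
      + destruct (Hcov c) as [Hc|Hc].
        * split.
          -- left. destruct H1 as [->| ->]; destruct H2 as [->| ->];
             rewrite ?(St2 u (or_introl eq_refl) c Hc), ?(St2 v (or_intror eq_refl) c Hc); reflexivity.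
          -- right; right; split; [exists x, c | exists y, c]; (split; [assumption|reflexivity]).
        * split.
          -- right; left. rewrite !RZ; auto.
          -- left. rewrite !RZ; auto.
      + destruct H1 as [s1 [q1 [Hq1 ->]]]. destruct H2 as [s2 [q2 [Hq2 ->]]].
        split; right; right; split.
        * exists (mul c s1), q1. rewrite A; split; [assumption|reflexivity].
        * exists (mul c s2), q2. rewrite A; split; [assumption|reflexivity].
        * exists s1, (mul q1 c). rewrite A; split; [auto|reflexivity].
        * exists s2, (mul q2 c). rewrite A; split; [auto|reflexivity]. }
  assert (UC : forall c, S0 c -> mul u c = mul v c).
  { intros c Hc.
    destruct (key th Hth (or_intror (or_introl (conj (or_introl eq_refl) (or_intror eq_refl)))) c Hc)
      as [E|[[_ E]|[E _]]].
    - subst c. rewrite !(proj1 (Z _)). reflexivity.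
    - exfalso; apply (UVn z E Hz).
    - destruct E as [s [q [Hq ->]]].
      destruct (Hcov s) as [Hs|[->| ->]].
      + rewrite !A, !St1; auto.
      + rewrite !A, Huu, Hvu; reflexivity.
      + rewrite !A, Huv', Hvv; reflexivity. }
  set (al := fun x y => x = y \/ (UV x /\ UV y)).
  assert (Hal : congruence mul al).
  { unfold al; split; [|split; [|split]].
    - intro; left; reflexivity.
    - intros x y [H|[H1 H2]]; [left; symmetry; assumption|right;split;assumption].
    - intros x y w [H|[H1 H2]] [H'|[H1' H2']]; subst; try (left; reflexivity); right; split; assumption.
    - intros x y c [H|[H1 H2]].
      + subst; split; left; reflexivity.
      + destruct (Hcov c) as [Hc|Hc].
        * split; left.
          -- destruct H1 as [->| ->]; destruct H2 as [->| ->];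
             rewrite ?(St2 u (or_introl eq_refl) c Hc), ?(St2 v (or_intror eq_refl) c Hc); reflexivity.
          -- destruct H1 as [->| ->]; destruct H2 as [->| ->]; auto; rewrite UC; auto.
        * split.
          -- right. rewrite !(RZ c); auto.
          -- left. rewrite !RZ; auto. }
  destruct (key al Hal (or_intror (conj (or_introl eq_refl) (or_intror eq_refl))) p0 Hp0)
    as [E|[_ E]].
  - contradiction.
  - exact (UVn z E Hz).
Qed.
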